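(* Let $2\le d_1\le d_2\le d_3\le d_4$, let $\rho$ be any (normalized) mixed state on $H_1\otimes H_2\otimes H_3\otimes H_4$ with $\dim H_i=d_i$, let $2\le m\le d_1$, and let $p_2,\dots,p_m\in[0,1]$ with $\sum_{s=2}^mp_s=1$. Then $$C^2(\rho)\ \ge\ \sum_{s=2}^{m}\frac{p_s}{\binom{d_1-2}{s-2}\binom{d_2-2}{s-2}\binom{d_3-1}{s-1}\binom{d_4-1}{s-1}}\sum_{\rho_{s\otimes s\otimes s\otimes s}}C^2(\rho_{s\otimes s\otimes s\otimes s}),$$ where for each $s$ the inner sum runs over all possible $s\otimes s\otimes s\otimes s$ substates of $\rho$.
   Context: Each $H_i\cong\mathbb{C}^{d_i}$ has a fixed computational basis. $C$ denotes the four-partite concurrence: for a (not necessarily normalized) vector $|\varphi\rangle$ with $\sigma=|\varphi\rangle\langle\varphi|$, $C(|\varphi\rangle)=2^{-1}\sqrt{14(\mathrm{tr}\,\sigma)^2-\sum_\alpha\mathrm{tr}(\sigma_\alpha^2)}$, $\alpha$ running over the 14 nonempty proper subsets of $\{1,2,3,4\}$ and $\sigma_\alpha=\mathrm{tr}_{\bar\alpha}\sigma$; for a (possibly unnormalized) positive semidefinite $\sigma$, $C(\sigma)=\min\sum_iC(|\psi_i\rangle)$ over all decompositions $\sigma=\sum_i|\psi_i\rangle\langle\psi_i|$ into unnormalized vectors. Substates: given subsets $S_i\subseteq\{1,\dots,d_i\}$ with $|S_i|=s$ and projectors $G_i=\sum_{x\in S_i}|x\rangle\langle x|$, the $s\otimes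 s\otimes s\otimes s$ substate of $\rho$ is the unnormalized operator $(G_1\otimes G_2\otimes G_3\otimes G_4)\rho(G_1\otimes G_2\otimes G_3\otimes G_4)$. $\binom{n}{k}=n!/(k!(n-k)!)$. *)

(* Defs.v *)
From HB Require Import structures.
From mathcomp Require Import all_boot all_order all_algebra.
From mathcomp Require Import boolp classical_sets reals.
From mathcomp Require Import complex.
Set Implicit Arguments. Unset Strict Implicit. Unset Printing Implicit Defensive.
Import Order.TTheory GRing.Theory Num.Theory.
Local Open Scope ring_scope.

Section FourPartite.
Variable R : realType.
Local Notation C := R[i].

Definition dims (d1 d2 d3 d4 : nat) (k : 'I_4) : nat := nth 0%N [:: d1; d2; d3; d4] k.

(* computational basis of H_1 (x) H_2 (x) H_3 (x) H_4 : tuples (x_1,...,x_4), x_k < d_k *)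
Definition basis4 (d : 'I_4 -> nat) := {dffun forall k : 'I_4, 'I_(d k)}.

Variable d : 'I_4 -> nat.
Local Notation T := (basis4 d).

Definition vec := T -> C.
Definition op := T -> T -> C.

Definition outer (v : vec) : op := fun x y => v x * (v y)^*.
Definition trace (s : op) : C := \sum_(x : T) s x x.

Definition psd (s : op) : Prop :=
  forall v : vec, 0 <= \sum_(x : T) \sum_(y : T) (v x)^* * s x y * v y.

Definition density (s : op) : Prop := psd s /\ trace s = 1.

Definition mix (alpha : {set 'I_4}) (u v : T) : T :=
  [ffun k => if k \in alpha then u k else v k].

(* tr((tr_{bar alpha} s)^2): writing x = (a,b), y = (a',b') with a,a' the
   alpha-coordinates, (tr_{bar alpha} s)(a,a') = sum_b s((a,b),(a',b)), hence
   tr(s_alpha^2) = sum_{a,a',b,b'} s((a,b),(a',b)) s((a',b'),(a,b')). *)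
Definition tr_red_sq (alpha : {set 'I_4}) (s : op) : C :=
  \sum_(x : T) \sum_(y : T) s x (mix alpha y x) * s y (mix alpha x y).

Definition proper_nonempty (alpha : {set 'I_4}) : bool :=
  (alpha != finset.set0) && (alpha != [set: 'I_4]).

Definition conc_vec (phi : vec) : R :=
  Num.sqrt (@complex.Re R (14%:R * (trace (outer phi)) ^+ 2
                 - \sum_(alpha : {set 'I_4} | proper_nonempty alpha)
                      tr_red_sq alpha (outer phi))) / 2%:R.

Definition decomposition (s : op) (psis : seq vec) : Prop :=
  forall x y, s x y = \sum_(psi <- psis) outer psi x y.

(* concurrence of a (possibly unnormalized) PSD operator: min (= inf) over
   all pure-state decompositions into unnormalized vectors *)
Definition conc (s : op) : R :=
  inf [set r : R | exists psis : seq vec,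
          decomposition s psis /\ r = \sum_(psi <- psis) conc_vec psi]%classic.

(* projector data G_k = sum_{x in S_k} |x><x| *)
Definition subsel := {dffun forall k : 'I_4, {set 'I_(d k)}}.

Definition in_sel (S : subsel) (x : T) : bool := [forall k, x k \in S k].

(* the substate (G_1 (x) ... (x) G_4) rho (G_1 (x) ... (x) G_4) *)
Definition substate (S : subsel) (rho : op) : op :=
  fun x y => if in_sel S x && in_sel S y then rho x y else 0.

Definition sel_size (s : nat) (S : subsel) : bool := [forall k, #|S k| == s].

End FourPartite.

(* Main.v *)
Require Import Defs.
From HB Require Import structures.
From mathcomp Require Import all_boot all_order all_algebra.
From mathcomp Require Import boolp classical_sets reals.
From mathcomp Require Import complex.
From mathcomp Require Import ring lra.
Import Order.TTheory GRing.Theory Num.Theory.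
Local Open Scope ring_scope.
Lemma card_pn : #|[pred a : {set 'I_4} | proper_nonempty a]| = 14%N.
Proof.
have h : #|[set: {set 'I_4}]| = 16.
  by rewrite -powersetT card_powerset cardsT card_ord.
rewrite (cardsD1 finset.set0) (cardsD1 (finset.setT : {set 'I_4})) !inE /= in h.
have ne : (finset.setT : {set 'I_4}) != finset.set0.
  by apply/eqP => /setP /(_ ord0); rewrite !inE.
rewrite ne /= in h.
have -> : (14 = #|[set: {set 'I_4}] :\ finset.set0 :\ [set: 'I_4]|)%N.
  by move: h; rewrite !add1n => -[].
apply: eq_card => A; rewrite !inE /proper_nonempty andbC.
by rewrite andbT.
Qed.
Section Pure.
Variables (R : realType) (d : 'I_4 -> nat).
Local Notation C := R[i].
Local Notation T := (basis4 d).

Definition sqn (z : C) : R := complex.Re z ^+ 2 + complex.Im z ^+ 2.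

Lemma mulcJ (z : C) : z * z^* = (sqn z)%:C%C.
Proof.
case: z => a b; rewrite /sqn /=.
by apply/eqP; rewrite eq_complex /=; apply/andP; split; apply/eqP; ring.
Qed.

Lemma sqn_ge0 z : 0 <= sqn z.
Proof. by rewrite /sqn addr_ge0 // sqr_ge0. Qed.

Lemma sqn_eq0 z : sqn z = 0 -> z = 0.
Proof.
case: z => a b; rewrite /sqn /= => h.
have /andP[ha hb] : (a ^+ 2 == 0) && (b ^+ 2 == 0).
  by rewrite -(paddr_eq0 (sqr_ge0 a) (sqr_ge0 b)) h.
by move: ha hb; rewrite !sqrf_eq0 => /eqP -> /eqP ->.
Qed.

Definition swp (al : {set 'I_4}) (p : T * T) : T * T :=
  (mix al p.2 p.1, mix al p.1 p.2).

Lemma mixK al (x y : T) : mix al (mix al x y) (mix al y x) = x.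
Proof. by apply/ffunP => k; rewrite !ffunE; case: (k \in al). Qed.

Lemma swpK al : involutive (swp al).
Proof. by case=> x y; rewrite /swp /= !mixK. Qed.

Lemma sum_swp al (F : T -> T -> C) :
  \sum_(x : T) \sum_(y : T) F x y =
  \sum_(x : T) \sum_(y : T) F (mix al y x) (mix al x y).
Proof.
rewrite !pair_bigA /=.
rewrite (reindex_inj (inv_inj (swpK al))) /=.
by apply: eq_bigr => -[x y] _.
Qed.

Definition Gf (phi : vec R d) al (x y : T) : C :=
  phi x * phi y - phi (mix al y x) * phi (mix al x y).

Lemma key_identity (phi : vec R d) al :
  \sum_(x : T) \sum_(y : T) Gf phi al x y * (Gf phi al x y)^* =
  2%:R * (trace (outer phi) ^+ 2 - tr_red_sq al (outer phi)).
Proof.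
pose P x y := phi x * phi y.
pose P' x y := phi (mix al y x) * phi (mix al x y).
have e1 : trace (outer phi) ^+ 2 = \sum_x \sum_y P x y * (P x y)^*.
  rewrite expr2 /trace /outer mulr_suml; apply: eq_bigr => x _.
  rewrite mulr_sumr; apply: eq_bigr => y _; rewrite /P rmorphM /=; ring.
have e2 : tr_red_sq al (outer phi) = \sum_x \sum_y P x y * (P' x y)^*.
  rewrite /tr_red_sq /outer; apply: eq_bigr => x _; apply: eq_bigr => y _.
  rewrite /P /P' rmorphM /=; ring.
have e3 : \sum_x \sum_y P' x y * (P' x y)^* = \sum_x \sum_y P x y * (P x y)^*.
  by rewrite (sum_swp al (fun x y => P x y * (P x y)^*)).
have e4 : \sum_x \sum_y P' x y * (P x y)^* = \sum_x \sum_y P x y * (P' x y)^*.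
  rewrite (sum_swp al (fun x y => P x y * (P' x y)^*)) /P /P'.
  by apply: eq_bigr => x _; apply: eq_bigr => y _; rewrite !mixK mulrC.
have -> : \sum_x \sum_y Gf phi al x y * (Gf phi al x y)^* =
  \sum_x (\sum_y P x y * (P x y)^* - \sum_y P x y * (P' x y)^*
          - \sum_y P' x y * (P x y)^* + \sum_y P' x y * (P' x y)^*).
  apply: eq_bigr => x _; rewrite -!sumrB -big_split /=.
  apply: eq_bigr => y _; rewrite /Gf /P /P' rmorphB /= rmorphM /= rmorphM /=; ring.
rewrite big_split /= !sumrB e3 e4 -e1 -e2; ring.
Qed.

Definition Xv (phi : vec R d) : R :=
  \sum_(al | proper_nonempty al) \sum_(x : T) \sum_(y : T) sqn (Gf phi al x y).

Lemma Xv_ge0 phi : 0 <= Xv phi.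
Proof. by apply: sumr_ge0 => al _; apply: sumr_ge0 => x _; apply: sumr_ge0 => y _; exact: sqn_ge0. Qed.

Lemma conc_vec_sq (phi : vec R d) : conc_vec phi ^+ 2 = Xv phi / 8%:R.
Proof.
rewrite /conc_vec; set Q := (14%:R * _ - _).
have hQ : Q = ((Xv phi) / 2%:R)%:C%C.
  apply: (@mulfI _ 2%:R); first by rewrite pnatr_eq0.
  rewrite rmorphM /= fmorphV /= rmorph_nat mulrCA mulfV ?mulr1; last by rewrite pnatr_eq0.
  rewrite /Q /Xv rmorph_sum /=.
  have -> : 14%:R * trace (outer phi) ^+ 2 =
     \sum_(al | proper_nonempty al) trace (outer phi) ^+ 2.
    by rewrite sumr_const card_pn mulr_natl.
  rewrite -sumrB mulr_sumr; apply: eq_bigr => al _.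
  rewrite -key_identity rmorph_sum /=; apply: eq_bigr => x _.
  rewrite rmorph_sum /=; apply: eq_bigr => y _.
  by rewrite mulcJ.
rewrite hQ /=.
rewrite expr_div_n sqr_sqrtr; last by rewrite divr_ge0 ?Xv_ge0 ?ler0n.
rewrite -mulrA -invfM; congr (_ / _); by rewrite -natrX -natrM.
Qed.

Definition restr (S : subsel d) (phi : vec R d) : vec R d :=
  fun x => if in_sel S x then phi x else 0.

Lemma in_sel_mix (S : subsel d) al (x y : T) :
  in_sel S x -> in_sel S y -> in_sel S (mix al x y).
Proof.
move=> /forallP hx /forallP hy; apply/forallP => k; rewrite ffunE.
by case: (k \in al).
Qed.

Lemma Gf_restr S phi al (x y : T) :
  Gf (restr S phi) al x y =
  if in_sel S x && in_sel S y then Gf phi al x y else 0.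
Proof.
rewrite /Gf /restr.
case hx: (in_sel S x); case hy: (in_sel S y) => /=.
- by rewrite !in_sel_mix.
- case h1: (in_sel S (mix al y x)); case h2: (in_sel S (mix al x y));
    rewrite ?mulr0 ?mul0r ?subrr //.
  by move: (in_sel_mix S al _ _ h1 h2); rewrite mixK hy.
- case h1: (in_sel S (mix al y x)); case h2: (in_sel S (mix al x y));
    rewrite ?mulr0 ?mul0r ?subrr //.
  by move: (in_sel_mix S al _ _ h2 h1); rewrite mixK hx.
- case h1: (in_sel S (mix al y x)); case h2: (in_sel S (mix al x y));
    rewrite ?mulr0 ?mul0r ?subrr //.
  by move: (in_sel_mix S al _ _ h2 h1); rewrite mixK hx.
Qed.

Lemma sqn0 : sqn 0 = 0.
Proof. by rewrite /sqn /= expr0n /= addr0. Qed.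

Definition cnt (s : nat) (x y : T) : nat :=
  #|[set S : subsel d | sel_size s S && in_sel S x && in_sel S y]|.

Lemma sum_Xv_restr s phi :
  \sum_(S : subsel d | sel_size s S) Xv (restr S phi) =
  \sum_(al | proper_nonempty al) \sum_(x : T) \sum_(y : T)
     sqn (Gf phi al x y) * (cnt s x y)%:R.
Proof.
rewrite /Xv exchange_big; apply: eq_bigr => al _.
rewrite exchange_big; apply: eq_bigr => x _.
rewrite exchange_big; apply: eq_bigr => y _.
under eq_bigr do rewrite Gf_restr (fun_if sqn) sqn0.
rewrite -big_mkcondr sumr_const mulr_natr /cnt.
by congr (_ *+ _); apply: eq_card => S; rewrite !inE unfold_in /= andbA.
Qed.

Lemma Gf_neq0 phi al (x y : T) : Gf phi al x y != 0 ->
  (exists2 k, k \in al & x k != y k) /\ (exists2 k, k \notin al & x k != y k).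
Proof.
move=> hG; split.
- apply/exists_inP; apply: contraNT hG => /exists_inPn h.
  have e1 : mix al y x = x.
    apply/ffunP => k; rewrite ffunE; case: ifP => // /h /negPn /eqP ->. by [].
  have e2 : mix al x y = y.
    apply/ffunP => k; rewrite ffunE; case: ifP => // /h /negPn /eqP ->. by [].
  by rewrite /Gf e1 e2 subrr.
- have : [exists k in [pred k | k \notin al], x k != y k].
    apply: contraNT hG => /exists_inPn h.
    have e1 : mix al y x = y.
      apply/ffunP => k; rewrite ffunE; case: ifP => // hk.
      by move: (h k); rewrite inE hk /= => /(_ isT) /negPn /eqP.
    have e2 : mix al x y = x.
      apply/ffunP => k; rewrite ffunE; case: ifP => // hk.
      by move: (h k); rewrite inE hk /= => /(_ isT) /negPn /eqP ->.
    by rewrite /Gf e1 e2 mulrC subrr.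
  by case/exists_inP => k; rewrite inE => h1 h2; exists k.
Qed.

Lemma pure_ineq s (N : nat) phi
  (hN : forall (al : {set 'I_4}) (x y : T), (exists2 k, k \in al & x k != y k) ->
     (exists2 k, k \notin al & x k != y k) -> (cnt s x y <= N)%N) :
  \sum_(S : subsel d | sel_size s S) conc_vec (restr S phi) ^+ 2
    <= N%:R * conc_vec phi ^+ 2.
Proof.
under eq_bigr do rewrite conc_vec_sq.
rewrite -mulr_suml sum_Xv_restr conc_vec_sq mulrA ler_wpM2r ?invr_ge0 ?ler0n //.
rewrite /Xv mulr_sumr; apply: ler_sum => al hal.
rewrite mulr_sumr; apply: ler_sum => x _.
rewrite mulr_sumr; apply: ler_sum => y _.
have [->|hG] := eqVneq (Gf phi al x y) 0; first by rewrite sqn0 mul0r mulr0.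
rewrite mulrC ler_wpM2r ?sqn_ge0 // ler_nat.
by case: (Gf_neq0 _ _ _ _ hG) => h1 h2; apply: hN h1 h2.
Qed.
End Pure.
Lemma conjC_rc (R : realType) (q : R) : ((q%:C)%C : R[i])^* = q%:C%C.
Proof. by apply/eqP; rewrite eq_complex /= oppr0 !eqxx. Qed.
Lemma re_rc (R : realType) (z : R[i]) : 0 <= z -> z = (complex.Re z)%:C%C.
Proof. by case: z => a b; rewrite lecE /= => /andP[/eqP hb _]; rewrite hb; apply/eqP; rewrite eq_complex /= !eqxx. Qed.
Section Dec.
Variables (R : realType) (d : 'I_4 -> nat).
Local Notation C := R[i].
Local Notation T := (basis4 d).

Definition Bf (s : op R d) (u v : vec R d) : C :=
  \sum_(x : T) \sum_(y : T) (u x)^* * s x y * v y.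

Definition dl (x : T) (a : C) : vec R d := fun z => if z == x then a else 0.

Definition vadd (u v : vec R d) : vec R d := fun z => u z + v z.

Lemma Bf_addl s u1 u2 v : Bf s (vadd u1 u2) v = Bf s u1 v + Bf s u2 v.
Proof.
rewrite /Bf -big_split; apply: eq_bigr => x _; rewrite -big_split.
by apply: eq_bigr => y _; rewrite /vadd rmorphD /=; ring.
Qed.

Lemma Bf_addr s u v1 v2 : Bf s u (vadd v1 v2) = Bf s u v1 + Bf s u v2.
Proof.
rewrite /Bf -big_split; apply: eq_bigr => x _; rewrite -big_split.
by apply: eq_bigr => y _; rewrite /vadd /= mulrDr.
Qed.

Lemma Bf_dl s x a y b : Bf s (dl x a) (dl y b) = a^* * s x y * b.
Proof.
rewrite /Bf (bigD1 x) //= [X in _ + X]big1 => [|z hz]; last first.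
  by apply: big1 => w _; rewrite /dl (negbTE hz) conjC0 !mul0r.
rewrite addr0 (bigD1 y) //= [X in _ + X]big1 => [|w hw]; last by rewrite /dl (negbTE hw) mulr0.
by rewrite addr0 /dl !eqxx.
Qed.

Lemma Bf_dll s x a v : Bf s (dl x a) v = a^* * \sum_(y : T) s x y * v y.
Proof.
rewrite /Bf (bigD1 x) //= [X in _ + X]big1 => [|z hz]; last first.
  by apply: big1 => w _; rewrite /dl (negbTE hz) conjC0 !mul0r.
rewrite addr0 mulr_sumr; apply: eq_bigr => y _; by rewrite /dl eqxx mulrA.
Qed.

Lemma Bf_dlr s x a u : Bf s u (dl x a) = (\sum_(y : T) (u y)^* * s y x) * a.
Proof.
rewrite /Bf mulr_suml; apply: eq_bigr => z _.
rewrite (bigD1 x) //= [X in _ + X]big1 => [|w hw]; last by rewrite /dl (negbTE hw) mulr0.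
by rewrite addr0 /dl eqxx.
Qed.

Lemma Bf_two s x a y b :
  Bf s (vadd (dl x a) (dl y b)) (vadd (dl x a) (dl y b)) =
  a^* * s x x * a + a^* * s x y * b + b^* * s y x * a + b^* * s y y * b.
Proof. by rewrite !Bf_addl !Bf_addr !Bf_dl; ring. Qed.

Lemma psd_diag (s : op R d) : psd s -> forall x, 0 <= s x x.
Proof.
move=> h x; have := h (dl x 1).
rewrite -/(Bf s (dl x 1) (dl x 1)) Bf_dl conjC1 mul1r mulr1 //.
Qed.

Lemma psd_herm (s : op R d) : psd s -> forall x y, s y x = (s x y)^*.
Proof.
move=> h x y.
have h1 := h (vadd (dl x 1) (dl y 1)).
have h2 := h (vadd (dl x 1) (dl y 'i)).
rewrite -/(Bf s _ _) Bf_two in h1.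
rewrite -/(Bf s _ _) Bf_two in h2.
have h3 := psd_diag _ h x; have h4 := psd_diag _ h y.
move: h1 h2 h3 h4; rewrite !conjC1 !mul1r !mulr1 !lecE.
case: (s x y) => a b; case: (s y x) => c e; case: (s x x) => p q; case: (s y y) => r t.
rewrite /= => /andP[/eqP i1 _] /andP[/eqP i2 _] /andP[/eqP hq _] /andP[/eqP ht _].
apply/eqP; rewrite eq_complex /=; apply/andP; split; apply/eqP; lra.
Qed.

Lemma psd_zero_row (s : op R d) : psd s -> forall x, s x x = 0 -> forall y, s x y = 0.
Proof.
move=> h x hx y; apply/eqP; apply: contraT => hne.
have hyy := psd_diag _ h y; have hh := psd_herm _ h x y.
set a := complex.Re (s x y); set b := complex.Im (s x y).
set k := (complex.Re (s y y) + 1) / (2%:R * (a ^+ 2 + b ^+ 2)).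
set c : C := Complex (- (k * a)) (- (k * b)).
have h1 := h (vadd (dl x c) (dl y 1)).
rewrite -/(Bf s _ _) Bf_two hx hh conjC1 in h1.
have hab : a ^+ 2 + b ^+ 2 != 0.
  apply: contra hne => /eqP hz; apply/eqP; apply: (sqn_eq0 R); exact: hz.
have hk : k * (2%:R * (a ^+ 2 + b ^+ 2)) = complex.Re (s y y) + 1.
  by rewrite /k mulfVK // mulf_neq0 // pnatr_eq0.
move: h1 hyy hk; rewrite /c /k /a /b.
case: (s x y) => a' b'; case: (s y y) => r t.
rewrite /= !lecE /= => /andP[_ h1] /andP[_ hr].
move=> hk.
move: h1 hk; set K := ((r + 1) / _) => h1 hk.
clear -h1 hr hk.
nra.
Qed.

Lemma Bf_sub (s : op R d) (v u : vec R d) :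
  Bf (fun z w => s z w - outer v z w) u u =
  Bf s u u - (\sum_(z : T) (u z)^* * v z) * (\sum_(w : T) (v w)^* * u w).
Proof.
rewrite /Bf mulr_suml -sumrB; apply: eq_bigr => z _.
rewrite mulr_sumr -sumrB; apply: eq_bigr => w _.
by rewrite /outer; ring.
Qed.

Lemma schur (s : op R d) x0 : psd s -> s x0 x0 != 0 ->
  exists v : vec R d,
    [/\ psd (fun z w => s z w - outer v z w),
        (forall z, s z z = 0 -> s z z - outer v z z = 0) &
        s x0 x0 - outer v x0 x0 = 0].
Proof.
move=> h hne.
have ha := re_rc _ _ (psd_diag _ h x0).
set ra := complex.Re (s x0 x0) in ha.
have hra : 0 < ra.
  have := psd_diag _ h x0; rewrite ha lecE /= => /andP[_ hr].
  rewrite lt_def hr andbT; apply: contra hne => /eqP e; by rewrite ha e.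
pose r : C := (Num.sqrt ra)%:C%C.
have hr0 : r != 0.
  by rewrite /r; apply/eqP => /eqP; rewrite eq_complex /= eqxx andbT sqrtr_eq0 leNgt hra.
have hrr : r * r = s x0 x0.
  by rewrite /r -rmorphM /= -expr2 sqr_sqrtr ?ltW // ha.
have hrc : r^* = r by rewrite /r conjC_rc.
exists (fun z => s z x0 / r).
have hout : forall z w, outer (fun z => s z x0 / r) z w = s z x0 * s x0 w / s x0 x0.
  move=> z w; rewrite /outer rmorphM /= fmorphV /= hrc (psd_herm _ h x0 w) conjCK.
  by rewrite -hrr; field.
split.
- move=> u; rewrite -/(Bf _ u u) Bf_sub.
  pose beta := \sum_(w : T) s x0 w * u w.
  pose c := - beta / s x0 x0.
  have := h (vadd u (dl x0 c)); rewrite -/(Bf s _ _) !Bf_addl !Bf_addr Bf_dl Bf_dll Bf_dlr.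
  have e1 : \sum_(z : T) (u z)^* * (s z x0 / r) = (\sum_(y : T) (u y)^* * s y x0) / r.
    by rewrite mulr_suml; apply: eq_bigr => z _; rewrite mulrA.
  have e2 : \sum_(w : T) (s w x0 / r)^* * u w = beta / r.
    rewrite /beta mulr_suml; apply: eq_bigr => w _.
    by rewrite rmorphM /= fmorphV /= hrc (psd_herm _ h x0 w) conjCK; ring.
  have e3 : (\sum_(y : T) (u y)^* * s y x0) = beta^*.
    rewrite /beta rmorph_sum /=; apply: eq_bigr => y _.
    by rewrite rmorphM /= mulrC (psd_herm _ h x0 y).
  rewrite e1 e2 e3.
  have hc : c^* = - beta^* / s x0 x0.
    by rewrite /c rmorphM /= fmorphV /= rmorphN /= ha conjC_rc.
  rewrite hc -/beta => hq; apply: le_trans hq _; rewrite le_eqVlt; apply/orP; left; apply/eqP.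
  rewrite /c -hrr; field; exact: hr0.
- move=> z hz; rewrite hout (psd_zero_row _ h z hz x0) mul0r mul0r subr0.
  exact: hz.
- by rewrite hout mulrAC divff // mul1r subrr.
Qed.

Lemma decomp_zero (s : op R d) : psd s -> (forall x, s x x = 0) ->
  exists psis, decomposition s psis.
Proof.
move=> h hz; exists [::] => x y; rewrite big_nil.
exact: psd_zero_row.
Qed.

Lemma decomp_ind n : forall s : op R d, psd s ->
  (#|[pred x | s x x != 0%R]| <= n)%N -> exists psis, decomposition s psis.
Proof.
elim: n => [|n IH] s h hc; case: (pickP [pred x | s x x != 0]) => [x0 hx0 | hall].
- by move: hc; rewrite leqn0 => /eqP /card0_eq /(_ x0); rewrite !inE /= => e; move: hx0; rewrite /= e.
- by apply: decomp_zero => // x; have := hall x; rewrite /= => /negbFE /eqP.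
- have [v [hv1 hv2 hv3]] := schur _ _ h hx0.
  have [ps hps] : exists psis, decomposition (fun z w => s z w - outer v z w) psis.
    apply: IH => //.
    have sub : {subset [pred x | s x x - outer v x x != 0] <= [predD1 [pred x | s x x != 0] & x0]}.
      move=> z; rewrite !inE /= => hz; apply/andP; split.
        by apply: contraNneq hz => ->; apply/eqP.
      by apply: contra hz => /eqP hz0; apply/eqP; apply: hv2.
    have hle : (#|[pred x | (s x x - outer v x x != 0)%R]| <= #|[predD1 [pred x | (s x x != 0)%R] & x0]|)%N.
      by apply: subset_leq_card; apply/fintype.subsetP.
    have := cardD1 x0 [pred x | s x x != 0%R]; rewrite inE /=; move: hx0; rewrite /= => -> e.
    move: hc; rewrite e add1n ltnS => hc'.
    exact: leq_trans hle hc'.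
  exists (v :: ps) => x y; rewrite big_cons -hps; ring.
- by apply: decomp_zero => // x; have := hall x; rewrite /= => /negbFE /eqP.
Qed.

Lemma decomp_exists_ (s : op R d) : psd s -> exists psis, decomposition s psis.
Proof. move=> h; exact: (decomp_ind _ _ h (leqnn _)). Qed.
End Dec.
Section Mink.
Variable R : realType.

Lemma sum_sq_eq0 (I : finType) (P : pred I) (u : I -> R) :
  \sum_(S | P S) u S ^+ 2 <= 0 -> forall S, P S -> u S = 0.
Proof.
move=> h S PS.
have h0 : \sum_(S | P S) u S ^+ 2 = 0.
  by apply/eqP; rewrite eq_le h sumr_ge0 // => i _; exact: sqr_ge0.
have /eqP := (psumr_eq0P (fun i _ => sqr_ge0 (u i)) h0 PS).
by rewrite sqrf_eq0 => /eqP.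
Qed.

Lemma cs_like (I : finType) (P : pred I) (u v : I -> R) (N a b : R) :
  0 <= N -> 0 <= a -> 0 <= b ->
  (forall S, 0 <= u S) -> (forall S, 0 <= v S) ->
  \sum_(S | P S) u S ^+ 2 <= N * a ^+ 2 ->
  \sum_(S | P S) v S ^+ 2 <= N * b ^+ 2 ->
  \sum_(S | P S) u S * v S <= N * a * b.
Proof.
move=> hN ha hb hu hv hU hV.
have [a0|apos] := eqVneq a 0.
  rewrite a0 expr0n /= mulr0 in hU.
  have := sum_sq_eq0 _ _ _ hU => hz.
  rewrite a0 mulr0 mul0r big1 // => S PS; by rewrite hz // mul0r.
have [b0|bpos] := eqVneq b 0.
  rewrite b0 expr0n /= mulr0 in hV.
  have := sum_sq_eq0 _ _ _ hV => hz.
  rewrite b0 mulr0 big1 // => S PS; by rewrite hz // mulr0.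
have hab : 0 < a * b by rewrite mulr_gt0 // lt_def ?apos ?bpos.
have e : \sum_(S | P S) (b * u S - a * v S) ^+ 2 =
   b ^+ 2 * \sum_(S | P S) u S ^+ 2 - 2%:R * (a * b) * \sum_(S | P S) u S * v S
   + a ^+ 2 * \sum_(S | P S) v S ^+ 2.
  rewrite !mulr_sumr -sumrB -big_split /=; apply: eq_bigr => S _; ring.
have h0 : 0 <= \sum_(S | P S) (b * u S - a * v S) ^+ 2.
  by apply: sumr_ge0 => S _; exact: sqr_ge0.
rewrite e in h0.
have h1 : b ^+ 2 * \sum_(S | P S) u S ^+ 2 <= b ^+ 2 * (N * a ^+ 2).
  by rewrite ler_wpM2l ?sqr_ge0.
have h2 : a ^+ 2 * \sum_(S | P S) v S ^+ 2 <= a ^+ 2 * (N * b ^+ 2).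
  by rewrite ler_wpM2l ?sqr_ge0.
set X := \sum_(S | P S) u S * v S in h0 *.
have h3 : 2%:R * (a * b) * X <= 2%:R * (a * b) * (N * a * b).
  set U := \sum_(S | P S) u S ^+ 2 in h0 h1.
  set V := \sum_(S | P S) v S ^+ 2 in h0 h2.
  have -> : 2%:R * (a * b) * (N * a * b) = b ^+ 2 * (N * a ^+ 2) + a ^+ 2 * (N * b ^+ 2) by ring.
  lra.
have h4 : 0 < 2%:R * (a * b) by rewrite mulr_gt0 // ltr0n.
by rewrite -(ler_pM2l h4).
Qed.

Lemma mink (I : finType) (P : pred I) (J : Type) (r : seq J) (f : J -> I -> R)
  (w : J -> R) (N : R) :
  0 <= N -> (forall j S, 0 <= f j S) -> (forall j, 0 <= w j) ->
  (forall j, \sum_(S | P S) f j S ^+ 2 <= N * w j ^+ 2) ->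
  \sum_(S | P S) (\sum_(j <- r) f j S) ^+ 2 <= N * (\sum_(j <- r) w j) ^+ 2.
Proof.
move=> hN hf hw hfw; elim: r => [|j r IH].
  by rewrite big_nil expr0n /= mulr0 big1 // => S _; rewrite big_nil expr0n.
rewrite big_cons.
have hU : forall S, 0 <= \sum_(i <- r) f i S by move=> S; apply: sumr_ge0.
have hW : 0 <= \sum_(i <- r) w i by apply: sumr_ge0.
have hc := cs_like _ _ _ _ _ _ _ hN (hw j) hW (hf j) hU (hfw j) IH.
have e : \sum_(S | P S) (\sum_(i <- j :: r) f i S) ^+ 2 =
  \sum_(S | P S) f j S ^+ 2 + 2%:R * \sum_(S | P S) f j S * (\sum_(i <- r) f i S)
  + \sum_(S | P S) (\sum_(i <- r) f i S) ^+ 2.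
  rewrite mulr_sumr -!big_split /=; apply: eq_bigr => S _; rewrite big_cons; ring.
rewrite e.
have := hfw j.
set A := \sum_(S | P S) f j S ^+ 2.
set B := \sum_(S | P S) (\sum_(i <- r) f i S) ^+ 2 in IH *.
set X := \sum_(S | P S) f j S * (\sum_(i <- r) f i S) in hc *.
set W := \sum_(i <- r) w i in hc IH *.
move=> hA.
have -> : N * (w j + W) ^+ 2 = N * w j ^+ 2 + 2%:R * (N * w j * W) + N * W ^+ 2 by ring.
lra.
Qed.
End Mink.
Lemma card_contain (T : finType) (B : {set T}) k :
  (#|[set A : {set T} | (#|A| == k) && (B \subset A)]| <=
   'C(#|T| - #|B|, k - #|B|))%N.
Proof.
pose f (A : {set T}) := A :\: B.
set X := [set A : {set T} | _].
have inj : {in X &, injective f}.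
  move=> A A'; rewrite !inE => /andP[_ hA] /andP[_ hA'] e.
  apply/setP => z; have /setP /(_ z) := e; rewrite !inE.
  case hz: (z \in B) => //= _.
  by rewrite (fintype.subsetP hA _ hz) (fintype.subsetP hA' _ hz).
rewrite -(card_in_imset inj) -(cardsC B) addKn -cards_draws.
apply: subset_leq_card; apply/fintype.subsetP => C /imsetP[A hA ->]; move: hA; rewrite !inE => /andP[/eqP hk hB].
by rewrite /f subsetDr cardsDS // hk eqxx.
Qed.

Lemma cnt1 n s (a b : 'I_n) : (2 <= s)%N ->
  (#|[set A : {set 'I_n} | [&& #|A| == s, a \in A & b \in A]]| <=
  if a == b then 'C(n - 1, s - 1) else 'C(n - 2, s - 2))%N.
Proof.
move=> hs.
have -> : [set A : {set 'I_n} | [&& #|A| == s, a \in A & b \in A]] =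
          [set A : {set 'I_n} | (#|A| == s) && ([set a; b] \subset A)].
  apply/setP => A; rewrite !inE; congr (_ && _).
  apply/andP/fintype.subsetP => [[ha hb] z|h].
    by rewrite !inE => /orP[] /eqP ->.
  by split; apply: h; rewrite !inE eqxx ?orbT.
apply: leq_trans (card_contain _ _ _) _.
rewrite card_ord cards2; case: eqP => _ //.
Qed.

Section Count.
Variable d : 'I_4 -> nat.
Lemma cnt_prod (s : nat) (x y : basis4 d) :
  (#|[set S : subsel d | sel_size s S && in_sel S x && in_sel S y]| <=
  \prod_(k : 'I_4) #|[set A : {set 'I_(d k)} | [&& #|A| == s, x k \in A & y k \in A]]|)%N.
Proof.
rewrite -(cardsXn (fun k => [set A : {set 'I_(d k)} | [&& #|A| == s, x k \in A & y k \in A]])).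
apply: subset_leq_card; apply/fintype.subsetP => S.
rewrite !inE => /andP[/andP[/forallP h1 /forallP h2] /forallP h3].
apply/forallP => k; rewrite inE.
by rewrite (h1 k) (h2 k) (h3 k).
Qed.
End Count.
From mathcomp Require Import zify.
Definition Ab (s n : nat) := 'C(n - 2, s - 2).
Definition Bb (s n : nat) := 'C(n - 1, s - 1).

Lemma AB_diag s n : (2 <= s)%N -> (s <= n)%N -> ((n - 1) * Ab s n = (s - 1) * Bb s n)%N.
Proof.
move=> hs hn; rewrite /Ab /Bb.
have := mul_bin_diag (n - 1) (s - 2).
have -> : (n - 1).-1 = (n - 2)%N by lia.
by have -> : (s - 2).+1 = (s - 1)%N by lia.
Qed.

Lemma Ab_le_Bb s n : (2 <= s)%N -> (s <= n)%N -> (Ab s n <= Bb s n)%N.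
Proof.
move=> hs hn; have e := AB_diag _ _ hs hn.
have hs1 : (0 < s - 1)%N by lia.
rewrite -(leq_pmul2l hs1) -e leq_mul2r; apply/orP; right; lia.
Qed.

Lemma AB_swap s n m : (2 <= s)%N -> (s <= n)%N -> (n <= m)%N ->
  (Ab s m * Bb s n <= Ab s n * Bb s m)%N.
Proof.
move=> hs hn hm.
have hs1 : (0 < s - 1)%N by lia.
rewrite -(leq_pmul2l hs1) mulnCA -(AB_diag _ _ hs hn) [X in (_ <= X)%N]mulnCA -(AB_diag _ _ hs (leq_trans hn hm)).
rewrite mulnCA [X in (_ <= X)%N]mulnCA; apply: leq_mul; first lia.
by rewrite mulnC.
Qed.

Lemma dims_ge d1 d2 d3 d4 (hd : [/\ (2 <= d1)%N, (d1 <= d2)%N, (d2 <= d3)%N & (d3 <= d4)%N])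
  (k : 'I_4) : (d1 <= dims d1 d2 d3 d4 k)%N.
Proof.
case: hd => h1 h2 h3 h4.
by case: k => [[|[|[|[|k]]]] hk] //=; rewrite /dims /=; lia.
Qed.

Lemma count_bound d1 d2 d3 d4
  (hd : [/\ (2 <= d1)%N, (d1 <= d2)%N, (d2 <= d3)%N & (d3 <= d4)%N])
  s (hs : (2 <= s <= d1)%N) (al : {set 'I_4}) (x y : basis4 (dims d1 d2 d3 d4))
  (hi : exists2 k, k \in al & x k != y k) (hj : exists2 k, k \notin al & x k != y k) :
  (#|[set S : subsel (dims d1 d2 d3 d4) | sel_size s S && in_sel S x && in_sel S y]| <=
   'C(d1 - 2, s - 2) * 'C(d2 - 2, s - 2) * 'C(d3 - 1, s - 1) * 'C(d4 - 1, s - 1))%N.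
Proof.
case/andP: hs => hs2 hs1.
apply: leq_trans (cnt_prod _ _ _ _) _.
case: hi => i hi hxi; case: hj => j hj hxj.
have hij : val i != val j.
  by apply/eqP => /val_inj e; move: hj; rewrite -e hi.
set D := dims d1 d2 d3 d4.
pose g (k : 'I_4) := if (val k == val i) || (val k == val j) then Ab s (D k) else Bb s (D k).
have hg : forall k : 'I_4, (#|[set A : {set 'I_(D k)} | [&& #|A| == s, x k \in A & y k \in A]]| <= g k)%N.
  move=> k; apply: leq_trans (cnt1 _ _ _ _ hs2) _.
  have hDk : (s <= D k)%N := leq_trans hs1 (dims_ge _ _ _ _ hd k).
  rewrite /g; case hk: ((val k == val i) || (val k == val j)).
    have -> : (x k == y k) = false.
      by case/orP: hk => /eqP/val_inj ->; apply/negbTE.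
    by [].
  by case: (x k == y k) => //; apply: Ab_le_Bb.
apply: leq_trans (leq_prod (fun k _ => hg k)) _.
rewrite !big_ord_recl big_ord0 /g /=.
case: hd => h1 h2 h3 h4.
have s01 := AB_swap _ _ _ hs2 hs1 h2.
have s02 := AB_swap _ _ _ hs2 hs1 (leq_trans h2 h3).
have s03 := AB_swap _ _ _ hs2 hs1 (leq_trans h2 (leq_trans h3 h4)).
have hs2' : (s <= d2)%N by lia.
have hs3' : (s <= d3)%N by lia.
have s12 := AB_swap _ _ _ hs2 hs2' h3.
have s13 := AB_swap _ _ _ hs2 hs2' (leq_trans h3 h4).
have s23 := AB_swap _ _ _ hs2 hs3' h4.
rewrite /D /dims /=.
rewrite /Ab /Bb in s01 s02 s03 s12 s13 s23 *.
set A1 := 'C(d1 - 2, s - 2) in s01 s02 s03 s12 s13 s23 *.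
set A2 := 'C(d2 - 2, s - 2) in s01 s02 s03 s12 s13 s23 *.
set A3 := 'C(d3 - 2, s - 2) in s01 s02 s03 s12 s13 s23 *.
set A4 := 'C(d4 - 2, s - 2) in s01 s02 s03 s12 s13 s23 *.
set B1 := 'C(d1 - 1, s - 1) in s01 s02 s03 s12 s13 s23 *.
set B2 := 'C(d2 - 1, s - 1) in s01 s02 s03 s12 s13 s23 *.
set B3 := 'C(d3 - 1, s - 1) in s01 s02 s03 s12 s13 s23 *.
set B4 := 'C(d4 - 1, s - 1) in s01 s02 s03 s12 s13 s23 *.
clear hg g; move: hij; case: i hi hxi => [[|[|[|[|i']]]] hi'] _ _ //=;
  case: j hj hxj => [[|[|[|[|j']]]] hj'] _ _ //= _.
all: first [ lia
 | (have := leq_mul s12 (leqnn (A1 * B4)); lia)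
 | (have := leq_mul s13 (leqnn (A1 * B3)); lia)
 | (have := leq_mul s02 (leqnn (A2 * B4)); lia)
 | (have := leq_mul s03 (leqnn (A2 * B3)); lia)
 | (have := leq_mul s02 (leqnn (A4 * B2)); have := leq_mul s13 (leqnn (A1 * B3)); lia) ].
Qed.
Arguments restr {R d}.
Arguments cnt {d}.

Section Mix.
Variables (R : realType) (d : 'I_4 -> nat).
Local Notation T := (basis4 d).

Lemma conc_vec_ge0 (phi : vec R d) : 0 <= conc_vec phi.
Proof. by rewrite /conc_vec divr_ge0 ?sqrtr_ge0 ?ler0n. Qed.

Lemma conc_le (s : op R d) psis : decomposition s psis ->
  conc s <= \sum_(psi <- psis) conc_vec psi.
Proof.
move=> hd; apply: ge_inf; last by exists psis.
exists 0 => r [ps [_ ->]]; apply: sumr_ge0 => ? _; exact: conc_vec_ge0.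
Qed.

Lemma conc_ge0 (s : op R d) psis : decomposition s psis -> 0 <= conc s.
Proof.
move=> hd; apply: lb_le_inf; first by exists (\sum_(psi <- psis) conc_vec psi); exists psis.
move=> r [ps [_ ->]]; apply: sumr_ge0 => ? _; exact: conc_vec_ge0.
Qed.

Lemma substate_decomp S (rho : op R d) psis : decomposition rho psis ->
  decomposition (substate S rho) (map (restr S) psis).
Proof.
move=> hd x y; rewrite /substate hd big_map.
case hx: (in_sel S x); case hy: (in_sel S y) => /=;
  apply/esym; (under eq_bigr do rewrite /outer /restr hx hy); rewrite //;
  apply: big1 => psi _; rewrite ?mul0r ?conjC0 ?mulr0 //.
Qed.

Lemma mix_ineq s (N : nat) (rho : op R d)
  (hN : forall (al : {set 'I_4}) (x y : T), (exists2 k, k \in al & x k != y k) ->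
     (exists2 k, k \notin al & x k != y k) -> (cnt s x y <= N)%N)
  psis (hdec : decomposition rho psis) :
  \sum_(S : subsel d | sel_size s S) conc (substate S rho) ^+ 2
    <= N%:R * (\sum_(psi <- psis) conc_vec psi) ^+ 2.
Proof.
apply: le_trans (_ : \sum_(S : subsel d | sel_size s S)
   (\sum_(psi <- psis) conc_vec (restr S psi)) ^+ 2 <= _).
  apply: ler_sum => S _.
  have hd' := substate_decomp S _ _ hdec.
  rewrite ler_sqr ?nnegrE ?(conc_ge0 _ _ hd') ?sumr_ge0 // => [|? _]; last exact: conc_vec_ge0.
  by have := conc_le _ _ hd'; rewrite big_map.
apply: mink => //.
- by move=> ? ?; exact: conc_vec_ge0.
- by move=> ?; exact: conc_vec_ge0.
- by move=> psi; apply: pure_ineq.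
Qed.

Lemma final_s s (N : nat) (rho : op R d)
  (hN : forall (al : {set 'I_4}) (x y : T), (exists2 k, k \in al & x k != y k) ->
     (exists2 k, k \notin al & x k != y k) -> (cnt s x y <= N)%N)
  (hN0 : (0 < N)%N)
  (hex : exists psis, decomposition rho psis) :
  \sum_(S : subsel d | sel_size s S) conc (substate S rho) ^+ 2
    <= N%:R * conc rho ^+ 2.
Proof.
case: hex => psis0 hd0.
set L := \sum_(S : subsel d | _) _.
have hL : 0 <= L by apply: sumr_ge0 => S _; exact: sqr_ge0.
have hNr : 0 < N%:R :> R by rewrite ltr0n.
have hc : 0 <= conc rho := conc_ge0 _ _ hd0.
have h : Num.sqrt (L / N%:R) <= conc rho.
  apply: lb_le_inf; first by exists (\sum_(psi <- psis0) conc_vec psi); exists psis0.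
  move=> r [ps [hps ->]].
  have hr : 0 <= \sum_(psi <- ps) conc_vec psi by apply: sumr_ge0 => ? _; exact: conc_vec_ge0.
  rewrite -(ger0_norm hr) -sqrtr_sqr ler_sqrt ?sqr_ge0 //.
  by rewrite ler_pdivrMr // mulrC (mix_ineq _ _ _ hN _ hps).
have h2 : L / N%:R <= conc rho ^+ 2.
  rewrite -(sqr_sqrtr (divr_ge0 hL (ltW hNr))).
  by rewrite ler_sqr ?nnegrE ?sqrtr_ge0.
by rewrite mulrC -ler_pdivrMr.
Qed.
End Mix.



Theorem corollary1 (R : realType) (d1 d2 d3 d4 : nat)
  (hd : [/\ (2 <= d1)%N, (d1 <= d2)%N, (d2 <= d3)%N & (d3 <= d4)%N])
  (rho : op R (dims d1 d2 d3 d4))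
  (hrho : density rho)
  (m : nat) (hm : (2 <= m <= d1)%N)
  (p : nat -> R)
  (hp : forall s, (2 <= s <= m)%N -> 0 <= p s <= 1)
  (hpsum : \sum_(2 <= s < m.+1) p s = 1) :
  conc rho ^+ 2 >=
  \sum_(2 <= s < m.+1)
     p s / ('C(d1 - 2, s - 2) * 'C(d2 - 2, s - 2)
            * 'C(d3 - 1, s - 1) * 'C(d4 - 1, s - 1))%:R
     * \sum_(S : subsel (dims d1 d2 d3 d4) | sel_size s S)
          conc (substate S rho) ^+ 2.
Proof.
have hex := decomp_exists_ _ _ _ hrho.1.
case/andP: hm => hm2 hmd.
have -> : conc rho ^+ 2 = (\sum_(2 <= s < m.+1) p s) * conc rho ^+ 2 by rewrite hpsum mul1r.
rewrite mulr_suml.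
apply: ler_sum_nat => s /andP[hs2 hs].
have hsm : (s <= m)%N by [].
have hsd : (s <= d1)%N := leq_trans hsm hmd.
have hs2' : (2 <= s <= d1)%N by rewrite hs2 hsd.
case: (hd) => h1 h2 h3 h4.
set N := ('C(d1 - 2, s - 2) * 'C(d2 - 2, s - 2) * 'C(d3 - 1, s - 1) * 'C(d4 - 1, s - 1))%N.
have hN0 : (0 < N)%N.
  rewrite /N !muln_gt0 !bin_gt0; apply/andP; split; [apply/andP; split; [apply/andP; split|]|]; lia.
have hN := fun al x y hi hj => count_bound _ _ _ _ hd s hs2' al x y hi hj.
have key := final_s _ _ _ _ _ hN hN0 hex.
have /andP[hp0 _] : (0 <= p s <= 1) by apply: hp; rewrite hs2 hsm.
have hNr : 0 < N%:R :> R by rewrite ltr0n.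
rewrite -mulrA ler_wpM2l //.
by rewrite ler_pdivrMl.
Qed.
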